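(* Let $n,k$ be positive integers and let $b_{\max} = \max\{b\in\mathbb{N}^* : WS^+_b(n+1) = WS^+(n+1)\}$. Then $$WS(n+k) \geq S(k)\,WS^+(n+1) + b_{\max}.$$
   Context: A set $A \subseteq \mathbb{N}$ is sum-free if for all $(a,b)\in A^2$ (allowing $a=b$), $a+b \notin A$; it is weakly sum-free if for all $(a,b)\in A^2$ with $a\neq b$, $a+b\notin A$. $S(n)$ (resp. $WS(n)$) is the largest $p$ such that $\{1,\dots,p\}$ can be partitioned into $n$ sum-free (resp. weakly sum-free) subsets. For positive integers $a>b$, let $\pi(x) = (x \bmod a) + a\cdot \mathbb{1}_{\{0,\dots,b\}}(x \bmod a)$. For positive integers $a,m,b$ with $a>b$, a partition $(A_1,\dots,A_m)$ of $\{1,\dots,a+b\}$ is a $b$-WS-template with width $a$ and $m$ colors if: (i) every $A_i$ is weakly sum-free; (ii) every $A_i\setminus\{1,\dots,b\}$ is sum-free; (iii) for all $(x,y)\in A_m^2$, $x+y>b+2a$ implies $x+y-2a\notin A_m$; (iv) for all $i\in\{1,\dots,m-1\}$ and $(x,y)\in A_i^2$, $x+y>a+b$ implies $\pi(x+y)\notin A_i$. $WS^+_b(m)$ is the largest $a$ such that a $b$-WS-template with width $a$ and $m$ colors exists ($0$ if none), and $WS^+(m)=\max_{b\in\mathbb{N}^*} WS^+_b(m)$. *)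

(* Defs.v *)
From mathcomp Require Import all_boot.
Set Implicit Arguments. Unset Strict Implicit. Unset Printing Implicit Defensive.

(* A partition of {1,...,N} into m (possibly empty) parts A_0,...,A_{m-1}
   is represented by a colouring c : nat -> nat with c x < m on {1..N};
   A_i = {x in {1..N} | c x = i}. *)
Definition inA (c : nat -> nat) (N i x : nat) : Prop := 1 <= x <= N /\ c x = i.

Definition colouring (c : nat -> nat) (N m : nat) : Prop :=
  forall x, 1 <= x <= N -> c x < m.

Definition SF_partitionable (n p : nat) : Prop :=
  exists c, colouring c p n /\
    forall i x y, inA c p i x -> inA c p i y -> ~ inA c p i (x + y).

Definition WSF_partitionable (n p : nat) : Prop :=
  exists c, colouring c p n /\
    forall i x y, x <> y -> inA c p i x -> inA c p i y -> ~ inA c p i (x + y).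

Definition IsLargest (P : nat -> Prop) (v : nat) : Prop :=
  P v /\ forall u, P u -> u <= v.

Definition pi_ab (a b x : nat) : nat := x %% a + a * (x %% a <= b).

(* b-WS-template with width a and m colours; the last part A_m is colour m.-1 *)
Definition WS_template (b a m : nat) : Prop :=
  0 < b /\ b < a /\ 0 < m /\
  exists c, colouring c (a + b) m /\
    (forall i x y, x <> y -> inA c (a + b) i x -> inA c (a + b) i y ->
        ~ inA c (a + b) i (x + y)) /\
    (forall i x y, b < x -> b < y -> inA c (a + b) i x -> inA c (a + b) i y ->
        ~ (b < x + y /\ inA c (a + b) i (x + y))) /\
    (forall x y, inA c (a + b) m.-1 x -> inA c (a + b) m.-1 y ->
        b + 2 * a < x + y -> ~ inA c (a + b) m.-1 (x + y - 2 * a)) /\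
    (forall i x y, i < m.-1 -> inA c (a + b) i x -> inA c (a + b) i y ->
        a + b < x + y -> ~ inA c (a + b) i (pi_ab a b (x + y))).

Definition IsWSplus_b (b m w : nat) : Prop :=
  (forall a, WS_template b a m -> a <= w) /\
  (WS_template b w m \/ (w = 0 /\ forall a, ~ WS_template b a m)).

Definition IsWSplus (m W : nat) : Prop :=
  (forall b, 0 < b -> exists w, IsWSplus_b b m w /\ w <= W) /\
  (exists b, 0 < b /\ IsWSplus_b b m W).

(* Main.v *)
Require Import Defs.
From mathcomp Require Import all_boot zify.

Definition rr (a b z : nat) := b.+1 + (z - b.+1) %% a.
Definition qq (a b z : nat) := (z - b.+1) %/ a.

Lemma qq_small a b z : z <= b -> qq a b z = 0.
Proof. move=> h; rewrite /qq; have -> : z - b.+1 = 0 by lia. by rewrite div0n. Qed.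

Lemma rq_uniq a b w q : 0 < a -> b < w <= a + b ->
  rr a b (w + q * a) = w /\ qq a b (w + q * a) = q.
Proof.
move=> a0 hw; rewrite /rr /qq.
have -> : w + q * a - b.+1 = q * a + (w - b.+1) by lia.
rewrite modnMDl divnMDl // modn_small ?divn_small; lia.
Qed.

Lemma dec a b z : 0 < a -> b < z -> exists w q, b < w <= a + b /\ z = w + q * a.
Proof.
move=> a0 hz; exists (b.+1 + (z - b.+1) %% a), ((z - b.+1) %/ a).
have := divn_eq (z - b.+1) a; have := ltn_pmod (z - b.+1) a0; lia.
Qed.

Lemma pi_w a b w q : b < a -> b < w <= a + b -> pi_ab a b (w + q * a) = w.
Proof.
move=> ba hw; rewrite /pi_ab (addnC w) modnMDl; idtac.
case: (ltnP w a) => hwa.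
  rewrite modn_small //; have -> : (w <= b) = false by lia. by rewrite muln0 addn0.
have -> : w %% a = w - a.
  by rewrite {1}(_ : w = (w - a) + a) ?modnDr ?modn_small; lia.
have -> : (w - a <= b) = true by lia. lia.
Qed.

Lemma main n k s a b (c d : nat -> nat) :
 0 < b -> b < a -> 0 < s ->
 colouring c (a+b) (n+1) ->
 (forall i x y, x <> y -> inA c (a + b) i x -> inA c (a + b) i y -> ~ inA c (a + b) i (x + y)) ->
 (forall i x y, b < x -> b < y -> inA c (a + b) i x -> inA c (a + b) i y -> ~ (b < x + y /\ inA c (a + b) i (x + y))) ->
 (forall x y, inA c (a + b) n x -> inA c (a + b) n y -> b + 2 * a < x + y -> ~ inA c (a + b) n (x + y - 2 * a)) ->
 (forall i x y, i < n -> inA c (a + b) i x -> inA c (a + b) i y -> a + b < x + y -> ~ inA c (a + b) i (pi_ab a b (x + y))) ->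
 colouring d s k ->
 (forall i x y, inA d s i x -> inA d s i y -> ~ inA d s i (x + y)) ->
 WSF_partitionable (n + k) (s * a + b).
Proof.
move=> b0 ba s0 cc Hi Hii Hiii Hiv dc dsf.
have a0 : 0 < a by lia.
pose R z := if z <= b then z else rr a b z.
pose col z := if c (R z) < n then c (R z) else n + d (qq a b z).+1.
have Rrange : forall z, 1 <= z -> 1 <= R z <= a + b.
  move=> z z1; rewrite /R; case: ifP => hz; first lia.
  rewrite /rr; have := ltn_pmod (z - b.+1) a0; lia.
have qbound : forall z, z <= s * a + b -> (qq a b z).+1 <= s.
  move=> z hz; rewrite /qq; suff : (z - b.+1) %/ a < s by lia.
  rewrite ltn_divLR //; lia.
have cR : forall z, 1 <= z -> c (R z) <= n.
  move=> z z1; have := cc (R z) (Rrange z z1); lia.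
have colE : forall z i, 1 <= z <= s * a + b -> col z = i ->
   inA c (a + b) i (R z) /\ i < n \/
   inA c (a + b) n (R z) /\ (n <= i /\ inA d s (i - n) (qq a b z).+1).
  move=> z i hz; rewrite /col; case: ifP => hc hi.
    by left; rewrite -hi; split => //; split => //; apply: Rrange; lia.
  right; have := cR z (ltac:(lia)); split.
    by split; [apply: Rrange; lia | lia].
  split; first lia.
  split; first by have := qbound z (ltac:(lia)); lia.
  lia.
have key : forall i x y, x < y -> inA col (s * a + b) i x -> inA col (s * a + b) i y ->
    inA col (s * a + b) i (x + y) -> False.
  move=> i x y xy [hx ex] [hy ey] [hz ez].
  have Ex := colE x i hx ex; have Ey := colE y i hy ey; have Ez := colE (x + y) i hz ez.
  case: (leqP y b) => yb.
    have Rx : R x = x by rewrite /R; have -> : x <= b by lia.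
    have Ry : R y = y by rewrite /R yb.
    have Rz : R (x + y) = x + y.
      rewrite /R; case: ifP => // hb'.
      have := @rq_uniq a b (x + y) 0 a0 (ltac:(lia)); rewrite mul0n addn0; by case.
    rewrite Rx in Ex; rewrite Ry in Ey; rewrite Rz in Ez.
    case: Ex => [[cx ix]|[cx [ix _]]]; case: Ey => [[cy iy]|[cy [iy _]]]; case: Ez => [[cz iz]|[cz [iz _]]];
      try (by apply: (Hi _ x y _ cx cy cz); lia); lia.
  have [Y [qy [hY ey']]] := dec a b y a0 yb.
  have Ry : R y = Y /\ qq a b y = qy.
    rewrite /R; have -> : (y <= b) = false by lia. rewrite ey'; exact: rq_uniq.
  case: Ry => Ry qyE; rewrite Ry qyE in Ey.
  case: (leqP x b) => xb.
    have Rx : R x = x by rewrite /R xb.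
    have qx0 : qq a b x = 0 by apply: qq_small.
    rewrite Rx qx0 in Ex.
    case: (leqP (x + Y) (a + b)) => hxY.
      have Rz : R (x + y) = x + Y.
        rewrite /R; have -> : (x + y <= b) = false by lia.
        rewrite ey' addnA; have := @rq_uniq a b (x + Y) qy a0 (ltac:(lia)); by case.
      rewrite Rz in Ez.
      case: Ex => [[cx ix]|[cx [ix _]]]; case: Ey => [[cy iy]|[cy [iy _]]]; case: Ez => [[cz iz]|[cz [iz _]]];
        try (by apply: (Hi _ x Y _ cx cy cz); lia); lia.
    have Rz : R (x + y) = x + Y - a /\ qq a b (x + y) = qy.+1.
      rewrite /R; have -> : (x + y <= b) = false by lia.
      have -> : x + y = (x + Y - a) + qy.+1 * a by rewrite ey' mulSn; lia.
      apply: rq_uniq => //; lia.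
    case: Rz => Rz qz; rewrite Rz qz in Ez.
    have piE : pi_ab a b (x + Y) = x + Y - a.
      rewrite {1}(_ : x + Y = (x + Y - a) + 1 * a); last lia.
      apply: pi_w => //; lia.
    case: Ex => [[cx ix]|[cx [ix dx]]]; case: Ey => [[cy iy]|[cy [iy dy]]]; case: Ez => [[cz iz]|[cz [iz dz]]];
      try lia.
      by apply: (Hiv i x Y ix cx cy hxY); rewrite piE.
    by apply: (dsf _ _ _ dx dy); rewrite add1n.
  have [X [qx [hX ex']]] := dec a b x a0 xb.
  have Rx : R x = X /\ qq a b x = qx.
    rewrite /R; have -> : (x <= b) = false by lia. rewrite ex'; exact: rq_uniq.
  case: Rx => Rx qxE; rewrite Rx qxE in Ex.
  have exy : x + y = (X + Y) + (qx + qy) * a by rewrite ex' ey' mulnDl; lia.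
  case: (leqP (X + Y) (a + b)) => hXY.
    have Rz : R (x + y) = X + Y.
      rewrite /R; have -> : (x + y <= b) = false by lia.
      rewrite exy; have := @rq_uniq a b (X + Y) (qx + qy) a0 (ltac:(lia)); by case.
    rewrite Rz in Ez.
    have bX : b < X by lia. have bY : b < Y by lia. have bXY : b < X + Y by lia.
    case: Ex => [[cx ix]|[cx [ix _]]]; case: Ey => [[cy iy]|[cy [iy _]]]; case: Ez => [[cz iz]|[cz [iz _]]];
      try exact: (Hii _ X Y bX bY cx cy (conj bXY cz)); lia.
  case: (leqP (X + Y) (2 * a + b)) => hXY2.
    have Rz : R (x + y) = X + Y - a /\ qq a b (x + y) = (qx + qy).+1.
      rewrite /R; have -> : (x + y <= b) = false by lia.
      have -> : x + y = (X + Y - a) + (qx + qy).+1 * a by rewrite exy mulSn; lia.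
      apply: rq_uniq => //; lia.
    case: Rz => Rz qz; rewrite Rz qz in Ez.
    have piE : pi_ab a b (X + Y) = X + Y - a.
      rewrite {1}(_ : X + Y = (X + Y - a) + 1 * a); last lia.
      apply: pi_w => //; lia.
    case: Ex => [[cx ix]|[cx [ix dx]]]; case: Ey => [[cy iy]|[cy [iy dy]]]; case: Ez => [[cz iz]|[cz [iz dz]]];
      try lia.
      by apply: (Hiv i X Y ix cx cy hXY); rewrite piE.
    by apply: (dsf _ _ _ dx dy); rewrite addSn addnS.
  have Rz : R (x + y) = X + Y - 2 * a.
    rewrite /R; have -> : (x + y <= b) = false by lia.
    have -> : x + y = (X + Y - 2 * a) + (qx + qy).+2 * a by rewrite exy !mulSn; lia.
    have := @rq_uniq a b (X + Y - 2 * a) (qx + qy).+2 a0 (ltac:(lia)); by case.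
  rewrite Rz in Ez.
  have piE : pi_ab a b (X + Y) = X + Y - 2 * a.
    rewrite {1}(_ : X + Y = (X + Y - 2 * a) + 2 * a); last lia.
    apply: pi_w => //; lia.
  case: Ex => [[cx ix]|[cx [ix dx]]]; case: Ey => [[cy iy]|[cy [iy dy]]]; case: Ez => [[cz iz]|[cz [iz dz]]];
    try lia.
    by apply: (Hiv i X Y ix cx cy (ltac:(lia))); rewrite piE.
  by apply: (Hiii X Y cx cy (ltac:(lia))).
exists col; split.
  move=> z hz; rewrite /col; case: ifP => hc; first lia.
  have := qbound z (ltac:(lia)); have := dc (qq a b z).+1; lia.
move=> i x y hxy hx hy hz.
case: (ltngtP x y) => h.
- exact: (key i x y h hx hy hz).
- apply: (key i y x h hy hx). by rewrite (addnC y x).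
- exact: (hxy h).
Qed.

Theorem corollary3p18 (n k : nat) (hn : 0 < n) (hk : 0 < k)
  (s W bmax : nat)
  (hS : IsLargest (SF_partitionable k) s)
  (hW : IsWSplus (n + 1) W)
  (hb : IsLargest (fun b => 0 < b /\ IsWSplus_b b (n + 1) W) bmax) :
  exists p, s * W + bmax <= p /\ WSF_partitionable (n + k) p.
Proof.
case: hb => [[b0 [_ hT]] hbmax].
case: hT => [T | [W0 _]]; last first.
  case: hW => hW1 _.
  have [w [hw wle]] := hW1 bmax.+1 (ltn0Sn _).
  have w0 : w = 0 by lia.
  subst w W.
  have := hbmax bmax.+1 (conj (ltn0Sn _) hw); lia.
case: T => _ [ba [_ [c [cc [Hi [Hii [Hiii Hiv]]]]]]].
case: hS => [[d [dc dsf]] hsmax].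
have s0 : 0 < s.
  apply: hsmax; exists (fun _ => 0); split.
    by move=> x _.
  move=> i x y [hx _] [hy _] [hz _]; lia.
exists (s * W + bmax); split => //.
rewrite addn1 /= in Hiii Hiv.
exact: (@main n k s W bmax c d b0 ba s0 cc Hi Hii Hiii Hiv dc dsf).
Qed.
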